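(* Let $K$ be a field of characteristic $0$, $U=K[x^{\pm1}]$ the Laurent polynomial algebra, $\beta\in K$, and let $Os(0,\beta)$ denote $U$ with the product $a\star b=\partial(ab)+2\beta x^{-2}ab$ ($\partial=d/dx$). Let $\overline{Os}(0,\beta)$ be the subspace spanned by the elements $\overline{x^i}$, $i\in\mathbb Z$, $i\neq-1$, where $\overline{x^i}=x^i$ for $i<-1$ and $\overline{x^i}=x^i+2(i+1)^{-1}\beta x^{i-1}$ for $i>-1$. Then $\overline{Os}(0,\beta)$ is closed under $\star$; moreover it is an ideal of $(Os(0,\beta),\star)$ of codimension $1$. *)

(* Defs.v *)
From HB Require Import structures.
From mathcomp Require Import all_boot all_order all_algebra.
Set Implicit Arguments. Unset Strict Implicit. Unset Printing Implicit Defensive.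
Import Order.TTheory GRing.Theory Num.Theory.
Local Open Scope ring_scope.

(* An element is represented in normal form by a pair (n, p) with
   n : nat and p : {poly K}, standing for x^(-n) * p, normalized so that
   n = 0 or x does not divide p (p`_0 != 0).  Hence Leibniz equality of
   [laurent K] is equality of Laurent polynomials. *)
Section Laurent.
Variable K : fieldType.

Definition lvalid (r : nat * {poly K}) : bool := (r.1 == 0%N) || (r.2`_0 != 0).

Record laurent := Laurent { lrep : nat * {poly K}; lrepP : lvalid lrep }.

Fixpoint lnorm (n : nat) (p : {poly K}) : nat * {poly K} :=
  match n with
  | 0%N => (0%N, p)
  | n'.+1 => if p`_0 == 0 then lnorm n' (drop_poly 1 p) else (n'.+1, p)
  end.

Lemma lnorm_valid n p : lvalid (lnorm n p).
Proof.
elim: n p => [|n IH] p /=; first by rewrite /lvalid eqxx.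
case: ifP => [_|H]; first exact: IH.
by rewrite /lvalid /= H.
Qed.

Definition mkL (n : nat) (p : {poly K}) : laurent := Laurent (lnorm_valid n p).

Definition lzero : laurent := mkL 0 0.
Definition ladd (a b : laurent) : laurent :=
  let: (n, p) := lrep a in let: (m, q) := lrep b in
  mkL (n + m) ('X^m * p + 'X^n * q).
Definition lscale (c : K) (a : laurent) : laurent :=
  let: (n, p) := lrep a in mkL n (c *: p).
Definition lmul (a b : laurent) : laurent :=
  let: (n, p) := lrep a in let: (m, q) := lrep b in mkL (n + m) (p * q).
(* d/dx (x^(-n) p) = x^(-(n+1)) (x p' - n p) *)
Definition lderiv (a : laurent) : laurent :=
  let: (n, p) := lrep a in mkL n.+1 ('X * p^`() - p *+ n).
Definition lmono (i : int) : laurent :=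
  match i with
  | Posz k => mkL 0 'X^k
  | Negz k => mkL k.+1 1
  end.

Definition lsum (s : seq (K * laurent)) : laurent :=
  foldr (fun cu acc => ladd (lscale cu.1 cu.2) acc) lzero s.

Definition os_star (beta : K) (a b : laurent) : laurent :=
  ladd (lderiv (lmul a b)) (lscale (2 * beta) (lmul (lmono (-2)) (lmul a b))).

Definition xbar (beta : K) (i : int) : laurent :=
  if i < -1 then lmono i
  else ladd (lmono i) (lscale (2 * ((i + 1)%:~R)^-1 * beta) (lmono (i - 1))).

Definition in_Osbar (beta : K) (u : laurent) : Prop :=
  exists s : seq (K * int),
    all (fun ci => ci.2 != -1) s /\
    u = lsum [seq (ci.1, xbar beta ci.2) | ci <- s].

End Laurent.

(* Main.v *)
Require Import Defs.
From mathcomp Require Import all_boot all_order all_algebra.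
Import Order.TTheory GRing.Theory Num.Theory.
Local Open Scope ring_scope.
From mathcomp Require Import zify ring.
Set Implicit Arguments. Unset Strict Implicit.

Section Aux.
Variable K : fieldType.

Definition pc (p : {poly K}) (j : int) : K :=
  match j with Posz k => p`_k | Negz _ => 0 end.

Lemma pcE p j : pc p j = if (0 <= j) then p`_(absz j) else 0.
Proof. by case: j. Qed.

Lemma pc_neg p j : j < 0 -> pc p j = 0.
Proof. by case: j. Qed.

Lemma pcD p q j : pc (p + q) j = pc p j + pc q j.
Proof. by case: j => [k|k] /=; rewrite ?coefD ?addr0. Qed.

Lemma pcB p q j : pc (p - q) j = pc p j - pc q j.
Proof. by case: j => [k|k] /=; rewrite ?coefB ?subr0. Qed.

Lemma pcZ c p j : pc (c *: p) j = c * pc p j.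
Proof. by case: j => [k|k] /=; rewrite ?coefZ ?mulr0. Qed.

Lemma pcMn p n j : pc (p *+ n) j = pc p j *+ n.
Proof. by case: j => [k|k] /=; rewrite ?coefMn ?mul0rn. Qed.

Lemma pc0 j : pc 0 j = 0.
Proof. by case: j => [k|k] /=; rewrite ?coef0. Qed.

Lemma pcXn m p j : pc ('X^m * p) j = pc p (j - m%:Z).
Proof.
rewrite !pcE coefXnM.
case: (boolP (0 <= j)) => h1; case: (boolP (0 <= j - m%:Z)) => h2.
- have -> : (absz j < m)%N = false by lia.
  congr (p`_ _); lia.
- have -> : (absz j < m)%N = true by lia. by [].
- lia.
- by [].
Qed.

Lemma pcXD p j : pc ('X * p^`()) j = j%:~R * pc p j.
Proof.
case: j => [k|k] /=; last by rewrite mulr0.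
rewrite coefXM; case: k => [|k] /=; first by rewrite mul0r.
by rewrite coef_deriv mulr_natl.
Qed.

Lemma pcXnk k j : pc 'X^k j = (j == k%:Z)%:R.
Proof. case: j => [i|i] /=; by rewrite ?coefXn. Qed.

Lemma pc1 j : pc 1 j = (j == 0)%:R.
Proof. case: j => [i|i] /=; by rewrite ?coef1. Qed.

Definition lc (a : laurent K) (i : int) : K :=
  pc (lrep a).2 (i + (lrep a).1%:Z).

Lemma lnorm_pc n p i :
  pc (lnorm n p).2 (i + (lnorm n p).1%:Z) = pc p (i + n%:Z).
Proof.
elim: n p i => [|n IH] p i //=.
case: ifP => [/eqP h|h] //.
rewrite IH !pcE coef_drop_poly.
case: (boolP (0 <= i + n%:Z)) => h1; case: (boolP (0 <= i + n.+1%:Z)) => h2.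
- congr (p`_ _); lia.
- lia.
- have -> : absz (i + n.+1%:Z) = 0%N by lia. by rewrite h.
- by [].
Qed.

Lemma lc_mkL n p i : lc (mkL n p) i = pc p (i + n%:Z).
Proof. exact: lnorm_pc. Qed.

Lemma lc_inj a b : (forall i, lc a i = lc b i) -> a = b.
Proof.
case: a => [[n p] Ha]; case: b => [[m q] Hb] H.
rewrite /lc /= in H.
have nm : n = m.
  case: (ltngtP n m) => // h.
  - move: Hb; rewrite /lvalid /=; have -> : (m == 0%N) = false by lia.
    move=> /= /negP []; apply/eqP.
    have := H (- m%:Z); rewrite addNr /= => <-; apply: pc_neg; lia.
  - move: Ha; rewrite /lvalid /=; have -> : (n == 0%N) = false by lia.
    move=> /= /negP []; apply/eqP.
    have := H (- n%:Z); rewrite addNr /= => ->; apply: pc_neg; lia.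
subst m.
have pq : p = q.
  apply/polyP => k; have := H (k%:Z - n%:Z); by rewrite subrK.
subst q; congr Laurent; exact: bool_irrelevance.
Qed.

Lemma lc_add a b i : lc (ladd a b) i = lc a i + lc b i.
Proof.
case: a => [[n p] Ha]; case: b => [[m q] Hb].
rewrite /ladd /= lc_mkL /lc /= pcD !pcXn; congr (pc _ _ + pc _ _); lia.
Qed.

Lemma lc_scale c a i : lc (lscale c a) i = c * lc a i.
Proof.
case: a => [[n p] Ha]; by rewrite /lscale /= lc_mkL /lc /= pcZ.
Qed.

Lemma lc_zero i : lc (lzero K) i = 0.
Proof. by rewrite /lzero lc_mkL pc0. Qed.

Lemma lc_mono k i : lc (lmono K k) i = (i == k)%:R.
Proof.
case: k => [k|k] /=; rewrite lc_mkL.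
  by rewrite pcXnk addr0.
rewrite pc1; congr (_%:R); apply/eqP/eqP; lia.
Qed.

Lemma lc_deriv a i : lc (lderiv a) i = (i + 1)%:~R * lc a (i + 1).
Proof.
case: a => [[n p] Ha]; rewrite /lderiv /= lc_mkL /lc /= pcB pcMn pcXD.
have -> : i + n.+1%:Z = i + 1 + n%:Z by lia.
rewrite -mulr_natl -mulrBl; congr (_ * _).
by rewrite intrD -pmulrn /= addrK.
Qed.

Lemma lc_m2 g i : lc (lmul (lmono K (-2)) g) i = lc g (i + 2).
Proof.
have -> : lmono K (-2) = mkL 2 1 by [].
case: g => [[m q] Hg].
rewrite /lmul.
have -> : lrep (mkL 2 (1 : {poly K})) = (2%N, 1).
  by rewrite /= coef1 /= oner_eq0.
rewrite /= lc_mkL /lc /= mul1r; congr (pc _ _); lia.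
Qed.

End Aux.

Section Phi.
Variable K : fieldType.
Hypothesis hK : [pchar K] =i pred0.
Variable beta : K.

Lemma natK_neq0 n : (0 < n)%N -> n%:R != 0 :> K.
Proof. by move=> h; rewrite ((pcharf0P K).1 hK) -lt0n. Qed.

Definition v (t : nat) : K := (- (2 * beta)) ^+ t / (t`!)%:R.

Definition phiN (a : laurent K) N := \sum_(0 <= t < N) lc a (t%:Z - 1) * v t.

Definition sz (a : laurent K) := size (lrep a).2.

Lemma pc_supp (p : {poly K}) (n : nat) (k : int) :
  (size p)%:Z <= k -> pc p (k + n%:Z) = 0.
Proof.
move=> h; rewrite pcE; case: ifP => // h0.
apply: nth_default. have [s hs] : exists s, size p = s by eexists. rewrite hs in h *. lia.
Qed.

Lemma lc_supp a (k : int) : (sz a)%:Z <= k -> lc a k = 0.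
Proof. exact: pc_supp. Qed.

Definition phi a := phiN a (sz a).+1.

Lemma phiN_stable a N M : (sz a < N)%N -> (N <= M)%N -> phiN a N = phiN a M.
Proof.
move=> h1 h2; rewrite /phiN [RHS](@big_cat_nat _ _ _ N) //=.
rewrite [X in _ + X]big1_seq ?addr0 // => t /andP[_].
rewrite mem_index_iota => /andP[h3 _].
rewrite lc_supp ?mul0r //; lia.
Qed.

Lemma phi_eq a N : (sz a < N)%N -> phi a = phiN a N.
Proof. by move=> h; apply: phiN_stable. Qed.

Lemma phi_add a b : phi (ladd a b) = phi a + phi b.
Proof.
set N := (sz a + sz b + sz (ladd a b)).+1.
rewrite !(phi_eq _ (N:=N)) /N; try lia.
by rewrite /phiN -big_split /=; apply: eq_bigr => t _; rewrite lc_add mulrDl.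
Qed.

Lemma phi_scale c a : phi (lscale c a) = c * phi a.
Proof.
set N := (sz a + sz (lscale c a)).+1.
rewrite !(phi_eq _ (N:=N)) /N; try lia.
by rewrite /phiN mulr_sumr; apply: eq_bigr => t _; rewrite lc_scale mulrA.
Qed.

Lemma phi_zero : phi (lzero K) = 0.
Proof. by rewrite /phi /phiN big1 // => t _; rewrite lc_zero mul0r. Qed.

Lemma phi_mono_ge (m : nat) : phi (lmono K (m%:Z - 1)) = v m.
Proof.
set a := lmono K _.
rewrite (phi_eq (N := (sz a + m).+1)); last lia.
rewrite /phiN big_mkord (bigD1 (Ordinal (n := (sz a + m).+1) (m := m) ltac:(lia))) //=.
rewrite lc_mono eqxx mul1r big1 ?addr0 // => i /eqP hi.
rewrite lc_mono; case: eqP; last by rewrite mul0r.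
move=> e; exfalso; apply: hi; apply: val_inj => /=; lia.
Qed.

Lemma phi_mono_lt (k : int) : k < -1 -> phi (lmono K k) = 0.
Proof.
move=> h; rewrite /phi /phiN big1 // => t _.
rewrite lc_mono; case: eqP; last by rewrite mul0r.
move=> e; lia.
Qed.

Lemma v_rec m : v m.+1 = - (2 * beta) / (m.+1)%:R * v m.
Proof.
rewrite /v factS natrM exprS.
have h1 := natK_neq0 (n := m.+1) isT.
have h2 := natK_neq0 (n := m`!) (fact_gt0 m).
field. by rewrite h2 addrC natr1 h1.
Qed.

End Phi.

Section Main.
Variable K : fieldType.
Hypothesis hK : [pchar K] =i pred0.
Variable beta : K.

Local Notation v := (v beta).
Local Notation phi := (phi beta).
Local Notation S := (in_Osbar beta).
Local Notation e := (lmono K (-1)).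

Lemma natz (n : nat) : ((n%:Z)%:~R : K) = n%:R.
Proof. by []. Qed.

Lemma lc_star_t u w (t : nat) :
  lc (os_star beta u w) (t%:Z - 1) =
  t%:R * lc (lmul u w) t%:Z + 2 * beta * lc (lmul u w) (t.+1)%:Z.
Proof.
rewrite /os_star lc_add lc_deriv lc_scale lc_m2 subrK natz.
have -> : t%:Z - 1 + 2 = t.+1%:Z by lia.
by [].
Qed.

Lemma phi_star u w : phi (os_star beta u w) = 0.
Proof.
set g := lmul u w.
set M := (sz (os_star beta u w) + sz g)%N.
rewrite (phi_eq beta (N := M.+1)); last lia.
rewrite /phiN.
rewrite (eq_bigr (fun t : nat => t%:R * lc g t%:Z * v t + 2 * beta * lc g t.+1%:Z * v t));
  last by move=> t _; rewrite lc_star_t mulrDl.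
rewrite big_split /= big_nat_recl // big_nat_recr //=.
rewrite (@lc_supp _ g M.+1%:Z); last by rewrite /M; lia.
rewrite !mul0r mulr0 mul0r add0r addr0 -big_split /=.
rewrite big1 // => t _.
rewrite (v_rec hK).
have h1 := natK_neq0 hK (n := t.+1) isT.
field. by rewrite addrC natr1 h1.
Qed.

Lemma S_ext a b : (forall i, lc a i = lc b i) -> S a -> S b.
Proof. by move=> H; rewrite (lc_inj H). Qed.

Lemma lc_lsum (l : seq (K * laurent K)) i : lc (lsum l) i = \sum_(cu <- l) cu.1 * lc cu.2 i.
Proof.
elim: l => [|cu l IH] /=; first by rewrite big_nil lc_zero.
by rewrite big_cons lc_add lc_scale IH.
Qed.

Lemma S_zero : S (lzero K).
Proof. by exists [::]. Qed.

Lemma S_add a b : S a -> S b -> S (ladd a b).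
Proof.
move=> [s1 [h1 ->]] [s2 [h2 ->]]; exists (s1 ++ s2); split.
  by rewrite all_cat h1 h2.
apply: lc_inj => i; by rewrite lc_add !lc_lsum map_cat big_cat.
Qed.

Lemma S_scale c a : S a -> S (lscale c a).
Proof.
move=> [s [h ->]]; exists [seq (c * ci.1, ci.2) | ci <- s]; split.
  by rewrite all_map.
apply: lc_inj => i; rewrite lc_scale !lc_lsum -map_comp !big_map mulr_sumr.
by apply: eq_bigr => ci _ /=; rewrite mulrA.
Qed.

Lemma S_xbar k : k != -1 -> S (xbar beta k).
Proof.
move=> hk; exists [:: (1, k)]; split; first by rewrite /= hk.
apply: lc_inj => i; by rewrite /= lc_add lc_scale lc_zero mul1r addr0.
Qed.

Definition T u := S (ladd u (lscale (- phi u) e)).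

Lemma T_lsum (f : nat -> K * laurent K) (s : seq nat) :
  (forall j, T (f j).2) -> T (lsum (map f s)).
Proof.
move=> H; elim: s => [|j s IH] /=.
  apply: S_ext S_zero => i; by rewrite lc_add lc_scale phi_zero lc_zero oppr0 mul0r addr0.
case E: (f j) => [c x].
have Hx : T x by have := H j; rewrite E.
apply: S_ext (S_add (S_scale c Hx) IH) => i.
rewrite !(lc_add, lc_scale, phi_add, phi_scale) /=.
ring.
Qed.

Lemma phi_mono_nat (m : nat) : phi (lmono K m%:Z) = v m.+1.
Proof.
have := phi_mono_ge beta m.+1; have -> : (m.+1%:Z - 1) = m%:Z by lia. done.
Qed.

Lemma xbar_nat (m : nat) : xbar beta m%:Z =
  ladd (lmono K m%:Z) (lscale (2 * (m.+1%:R)^-1 * beta) (lmono K (m%:Z - 1))).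
Proof.
rewrite /xbar; have -> : (m%:Z < -1) = false by lia.
by have -> : m%:Z + 1 = m.+1%:Z by lia.
Qed.

Lemma v0 : v 0 = 1.
Proof. by rewrite /v expr0 fact0 divr1. Qed.

Lemma T_mono_ge (m : nat) : T (lmono K (m%:Z - 1)).
Proof.
elim: m => [|m IH].
  apply: S_ext S_zero => i; rewrite /T phi_mono_ge v0 lc_add lc_scale !lc_mono lc_zero sub0r.
  by rewrite mulN1r subrr.
have Hx : S (xbar beta m%:Z) by apply: S_xbar; lia.
have := S_add Hx (S_scale (- (2 * (m.+1%:R)^-1 * beta)) IH).
apply: S_ext => i.
rewrite /T phi_mono_ge xbar_nat phi_mono_ge (v_rec hK).
have -> : m.+1%:Z - 1 = m%:Z by lia.
rewrite !(lc_add, lc_scale).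
ring.
Qed.

Lemma T_mono k : T (lmono K k).
Proof.
case: (boolP (k < -1)) => hk.
  have := S_xbar (k := k) ltac:(lia).
  apply: S_ext => i; rewrite /xbar hk lc_add lc_scale phi_mono_lt // oppr0 mul0r addr0.
  by [].
have -> : k = (absz (k + 1))%:Z - 1 by lia.
exact: T_mono_ge.
Qed.

Lemma sum_delta (p : {poly K}) (n : nat) (i : int) (s : nat) :
  \sum_(0 <= j < s) p`_j * ((i == j%:Z - n%:Z)%:R) =
  if (0 <= i + n%:Z) && (i + n%:Z < s%:Z) then pc p (i + n%:Z) else 0.
Proof.
elim: s => [|s IH].
  rewrite big_geq //; case: ifP => //; move=> /andP [h1 h2]; lia.
rewrite big_nat_recr //= IH.
case: (eqP (x := i)) => h.
  have -> : (0 <= i + n%:Z) && (i + n%:Z < s%:Z) = false by apply/negbTE; lia.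
  have -> : (0 <= i + n%:Z) && (i + n%:Z < s.+1%:Z) = true by apply/idP; lia.
  have -> : i + n%:Z = s%:Z by lia.
  by rewrite /= mulr1 add0r.
rewrite mulr0 addr0.
have -> : (0 <= i + n%:Z) && (i + n%:Z < s.+1%:Z) = (0 <= i + n%:Z) && (i + n%:Z < s%:Z).
  by apply/idP/idP; lia.
by [].
Qed.

Lemma expand u : u = lsum [seq (((lrep u).2)`_j, lmono K (j%:Z - ((lrep u).1)%:Z)) | j <- iota 0 (size (lrep u).2)].
Proof.
apply: lc_inj => i; rewrite lc_lsum big_map /=.
under eq_bigr => j _ do rewrite lc_mono.
have -> : iota 0 (size (lrep u).2) = index_iota 0 (size (lrep u).2) by rewrite /index_iota subn0.
rewrite sum_delta.
case: ifP => // /negbT h.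
rewrite /lc pcE; case: ifP => // h0.
apply: nth_default.
move: h h0; have [s hs] : exists s, size (lrep u).2 = s by eexists.
rewrite hs; lia.
Qed.

Lemma T_all u : T u.
Proof.
rewrite [u in T u]expand; apply: T_lsum => j /=.
exact: T_mono.
Qed.

Lemma S_star u w : S (os_star beta u w).
Proof.
have := T_all (os_star beta u w); rewrite /T phi_star.
apply: S_ext => i; by rewrite lc_add lc_scale oppr0 mul0r addr0.
Qed.

Lemma phi_xbar k : k != -1 -> phi (xbar beta k) = 0.
Proof.
move=> hk; case: (boolP (k < -1)) => h.
  by rewrite /xbar h phi_mono_lt.
have -> : k = (absz k)%:Z by lia.
rewrite xbar_nat phi_add phi_scale phi_mono_nat phi_mono_ge (v_rec hK).
have h1 := natK_neq0 hK (n := (absz k).+1) isT.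
field. by rewrite addrC natr1.
Qed.

Lemma phi_S a : S a -> phi a = 0.
Proof.
move=> [s [h ->]]; elim: s h => [|[c k] s IH] /=; first by rewrite phi_zero.
move=> /andP [hk hs]; by rewrite phi_add phi_scale phi_xbar // mulr0 add0r IH.
Qed.

End Main.

Unset Implicit Arguments.
Theorem mainTheorem15 (K : fieldType) (hK : [pchar K] =i pred0) (beta : K) :
  (forall a b : laurent K, in_Osbar beta a -> in_Osbar beta b ->
     in_Osbar beta (os_star beta a b))
  /\
  (forall u v : laurent K, in_Osbar beta v ->
     in_Osbar beta (os_star beta u v) /\ in_Osbar beta (os_star beta v u))
  /\
  (exists e : laurent K, ~ in_Osbar beta e /\
     forall u : laurent K, exists c : K, in_Osbar beta (ladd u (lscale (- c) e))).
Proof.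
split; first by move=> a b _ _; apply: S_star.
split; first by move=> u w _; split; apply: S_star.
exists (lmono K (-1)); split.
  move=> /(phi_S hK) h; move: h.
  have := phi_mono_ge beta 0; rewrite sub0r => ->; rewrite v0.
  by move/eqP; rewrite oner_eq0.
by move=> u; exists (phi beta u); apply: T_all.
Qed.
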